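(* Let $T\subset\mathbb{R}^2$ be an isosceles triangle with apex $A$, height $h$ (Euclidean distance from $A$ to the base), and let $x_0$ be the point on the axis of symmetry of $T$ at Euclidean distance $h_2$ from $A$, where $0<h_2<h$. Then $$\pi_{T,x_0}=\frac12\left(\frac{4h}{h_2}+\frac{h}{h-h_2}\right).$$ Consequently $\pi_{T,x_0}\to\infty$ as $h_2\to0^+$ or $h_2\to h^-$, $\pi_{T,x_0}$ is strictly decreasing for $0<h_2<2h/3$ and strictly increasing for $2h/3<h_2<h$, and its minimum value is $\pi_{T,x_0}=9/2$, attained exactly at $h_2=2h/3$ (the centroid), independently of the side lengths of $T$.
   Context: For a convex set $B\subset\mathbb{R}^2$ and an interior point $x_0$, $\|x\|_{B,x_0}:=\inf\{\xi>0 : x\in \xi(B-x_0)\}$. For a convex polygon $B$ with vertices $p_0,\dots,p_n=p_0$ in counterclockwise order, $\pi_{B,x_0}:=\frac12\sum_{i=1}^n\|p_i-p_{i-1}\|_{B,x_0}$ (half of the perimeter of $B$ measured by its own offset functional; when $B$ is symmetric about a line through $x_0$ this equals the clockwise value). *)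

(* Defs.v *)
From mathcomp Require Import all_boot all_order all_algebra.
From mathcomp Require Import all_classical all_reals all_analysis.
Set Implicit Arguments. Unset Strict Implicit. Unset Printing Implicit Defensive.
Import Order.TTheory GRing.Theory Num.Theory.
Local Open Scope classical_set_scope.
Local Open Scope ring_scope.

Section Defs.
Variable R : realType.
Notation pt := (R * R)%type.

Definition psub (x y : pt) : pt := (x.1 - y.1, x.2 - y.2).
Definition pscale (k : R) (x : pt) : pt := (k * x.1, k * x.2).
Definition padd (x y : pt) : pt := (x.1 + y.1, x.2 + y.2).

Definition enorm (x : pt) : R := Num.sqrt (x.1 ^+ 2 + x.2 ^+ 2).
Definition eucl_dist (x y : pt) : R := enorm (psub x y).

Definition cross (u v : pt) : R := u.1 * v.2 - u.2 * v.1.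

Definition gauge (B : set pt) (x0 x : pt) : R :=
  inf [set xi : R | 0 < xi /\ exists b, B b /\ x = pscale xi (psub b x0)].

Definition polygon_pi (B : set pt) (x0 : pt) (ps : seq pt) : R :=
  2^-1 * \sum_(i < size ps)
     gauge B x0 (psub (nth (0, 0) ps ((i.+1) %% size ps)) (nth (0, 0) ps i)).

Definition triangle (A P Q : pt) : set pt :=
  [set p | exists a b c : R, [/\ 0 <= a, 0 <= b, 0 <= c, a + b + c = 1 &
     p = padd (pscale a A) (padd (pscale b P) (pscale c Q))]].

Definition ccw (A P Q : pt) : Prop := 0 < cross (psub P A) (psub Q A).

Definition dist_to_line (A P Q : pt) : R :=
  `|cross (psub Q P) (psub A P)| / eucl_dist Q P.

Definition midpoint (P Q : pt) : pt := pscale 2^-1 (padd P Q).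

Definition axis_point (A P Q : pt) (t : R) : pt :=
  padd A (pscale (t / eucl_dist (midpoint P Q) A) (psub (midpoint P Q) A)).

End Defs.

(* Main.v *)
Require Import Defs.
From mathcomp Require Import all_boot all_order all_algebra.
From mathcomp Require Import all_classical all_reals all_analysis.
From mathcomp Require Import ring lra.
Import Order.TTheory GRing.Theory Num.Theory.
Local Open Scope classical_set_scope.
Local Open Scope ring_scope.

Lemma inf_char (R : realType) (S : set R) k :
  S k -> (forall xi, S xi -> k <= xi) -> inf S = k.
Proof.
move=> Sk lb; apply/le_anti/andP; split.
  by apply: (ge_inf _ Sk); exists k.
by apply: lb_le_inf; [exists k|].
Qed.

Lemma indep (R : realType) (u1 u2 w1 w2 p q : R) :
  u1 * w2 - u2 * w1 != 0 -> p * u1 + q * w1 = 0 -> p * u2 + q * w2 = 0 ->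
  p = 0 /\ q = 0.
Proof.
move=> D e1 e2.
have hq : q * (u1 * w2 - u2 * w1) = 0.
  have -> : q * (u1 * w2 - u2 * w1) = u1 * (p * u2 + q * w2) - u2 * (p * u1 + q * w1) by ring.
  by rewrite e1 e2; ring.
have hp : p * (u1 * w2 - u2 * w1) = 0.
  have -> : p * (u1 * w2 - u2 * w1) = w2 * (p * u1 + q * w1) - w1 * (p * u2 + q * w2) by ring.
  by rewrite e1 e2; ring.
move: hq hp => /eqP; rewrite mulf_eq0 (negbTE D) orbF => /eqP ->.
by move/eqP; rewrite mulf_eq0 (negbTE D) orbF => /eqP ->.
Qed.

Lemma memS (R : realType) (A P Q v : R * R) (t al ga xi : R) :
  cross (psub P A) (psub Q A) != 0 ->
  v.1 = al * (P.1 - A.1) + ga * (Q.1 - A.1) ->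
  v.2 = al * (P.2 - A.2) + ga * (Q.2 - A.2) -> 0 < xi ->
  ((exists b, triangle A P Q b /\
     v = pscale xi (psub b (padd A (pscale t (psub (midpoint P Q) A))))) <->
   [/\ 0 <= t / 2 + al / xi, 0 <= t / 2 + ga / xi & 0 <= 1 - t - (al + ga) / xi]).
Proof.
case: A => a1 a2; case: P => p1 p2; case: Q => q1 q2; case: v => v1 v2 /=.
rewrite /cross /psub /= => D -> -> xi0.
have xin : xi != 0 by rewrite gt_eqF.
split.
  move=> [[b1 b2] [[a [b [c [a0 b0 c0 abc]]]]]].
  rewrite /pscale /padd /= => -[-> ->] [e1 e2].
  have ea : a = 1 - b - c by lra.
  subst a.
  have [] := @indep R (p1 - a1) (p2 - a2) (q1 - a1) (q2 - a2)
     (xi * (b - t / 2) - al) (xi * (c - t / 2) - ga) D.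
  - move: e1; rewrite /midpoint /pscale /padd /= => e1.
    rewrite -(subrr (al * (p1 - a1) + ga * (q1 - a1))) {1}e1; by field.
  - move: e2; rewrite /midpoint /pscale /padd /= => e2.
    rewrite -(subrr (al * (p2 - a2) + ga * (q2 - a2))) {1}e2; by field.
  move=> /eqP; rewrite subr_eq0 => /eqP eb /eqP; rewrite subr_eq0 => /eqP ec.
  have Eb : b = t / 2 + al / xi by rewrite -eb; by field.
  have Ec : c = t / 2 + ga / xi by rewrite -ec; by field.
  split; [by rewrite -Eb|by rewrite -Ec|].
  by have -> : 1 - t - (al + ga) / xi = 1 - b - c by rewrite Eb Ec; field.
move=> [hb hc ha].
exists (padd (pscale (1 - t - (al + ga) / xi) (a1, a2))
          (padd (pscale (t / 2 + al / xi) (p1, p2)) (pscale (t / 2 + ga / xi) (q1, q2)))).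
split.
  exists (1 - t - (al + ga) / xi), (t / 2 + al / xi), (t / 2 + ga / xi).
  by split => //; field.
rewrite /pscale /padd /midpoint /=; congr pair; by field.
Qed.

Section G.
Variable R : realType.
Variables (A P Q : R * R) (t : R).
Hypothesis D : cross (psub P A) (psub Q A) != 0.
Hypothesis t0 : 0 < t.
Hypothesis t1 : t < 1.
Let x0 := padd A (pscale t (psub (midpoint P Q) A)).

Lemma gauge1 : gauge (triangle A P Q) x0 (psub P A) = (1 - t)^-1.
Proof.
have t0' := t0; have t1' := t1.
have k0 : 0 < (1 - t)^-1 by rewrite invr_gt0 subr_gt0.
apply: inf_char.
  split => //; apply/(@memS R A P Q (psub P A) t 1 0 (1 - t)^-1) => //=; first (by ring); first by ring.
  rewrite addr0 div1r invrK; split; last by rewrite subrr.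
    by lra.
  by rewrite mul0r addr0; lra.
move=> xi [xi0 Hex].
have [H _] := @memS R A P Q (psub P A) t 1 0 xi D ltac:(rewrite /=; ring) ltac:(rewrite /=; ring) xi0.
have [h1 h2 h3] := H Hex.
move: h3; rewrite addr0 div1r => h.
by rewrite -lef_pV2 ?posrE // invrK; lra.
Qed.

Lemma gauge2 : gauge (triangle A P Q) x0 (psub Q P) = 2 / t.
Proof.
have t0' := t0; have t1' := t1.
have k0 : 0 < 2 / t by apply: divr_gt0.
apply: inf_char.
  split => //; apply/(@memS R A P Q (psub Q P) t (-1) 1 (2 / t)) => //=; first (by ring); first by ring.
  rewrite !div1r !mulN1r invf_div; split.
  - by rewrite subr_ge0.
  - by apply: addr_ge0; [apply: divr_ge0|apply: divr_ge0]; lra.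
  - by rewrite addNr mul0r; lra.
move=> xi [xi0 Hex].
have [H _] := @memS R A P Q (psub Q P) t (-1) 1 xi D ltac:(rewrite /=; ring) ltac:(rewrite /=; ring) xi0.
have [h1 h2 h3] := H Hex.
move: h1; rewrite mulN1r => h.
by rewrite -lef_pV2 ?posrE // invf_div; lra.
Qed.

Lemma gauge3 : gauge (triangle A P Q) x0 (psub A Q) = 2 / t.
Proof.
have t0' := t0; have t1' := t1.
have k0 : 0 < 2 / t by apply: divr_gt0.
apply: inf_char.
  split => //; apply/(@memS R A P Q (psub A Q) t 0 (-1) (2 / t)) => //=; first (by ring); first by ring.
  rewrite !mulN1r invf_div add0r mul0r; split.
  - by rewrite addr0; apply: divr_ge0; lra.
  - by rewrite subrr.
  - lra.
move=> xi [xi0 Hex].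
have [H _] := @memS R A P Q (psub A Q) t 0 (-1) xi D ltac:(rewrite /=; ring) ltac:(rewrite /=; ring) xi0.
have [h1 h2 h3] := H Hex.
move: h2; rewrite mulN1r => h.
by rewrite -lef_pV2 ?posrE // invf_div; lra.
Qed.
End G.

Lemma geom (R : realType) (A P Q : R * R) : ccw A P Q -> eucl_dist A P = eucl_dist A Q ->
  0 < dist_to_line A P Q /\ eucl_dist (midpoint P Q) A = dist_to_line A P Q.
Proof.
case: A => a1 a2; case: P => p1 p2; case: Q => q1 q2.
rewrite /ccw /dist_to_line /eucl_dist /enorm /cross /midpoint /psub /pscale /padd /=.
set D := (p1 - a1) * (q2 - a2) - (p2 - a2) * (q1 - a1) => D0 /eqP.
rewrite eqr_sqrt ?addr_ge0 ?sqr_ge0 // => /eqP iso.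
set X := (2^-1 * (p1 + q1) - a1) ^+ 2 + (2^-1 * (p2 + q2) - a2) ^+ 2.
set Y := (q1 - p1) ^+ 2 + (q2 - p2) ^+ 2.
have -> : (q1 - p1) * (a2 - p2) - (q2 - p2) * (a1 - p1) = D by rewrite /D; ring.
have key : X * Y = D ^+ 2.
  have : X * Y - D ^+ 2 = ((a1 - p1) ^+ 2 + (a2 - p2) ^+ 2 - ((a1 - q1) ^+ 2 + (a2 - q2) ^+ 2)) ^+ 2 / 4.
    by rewrite /X /Y /D; field.
  by rewrite iso subrr expr0n /= mul0r => /eqP; rewrite subr_eq0 => /eqP.
have Y0 : 0 < Y.
  rewrite lt_def addr_ge0 ?sqr_ge0 // andbT; apply/eqP => Y0.
  by move: key; rewrite Y0 mulr0 => /esym/eqP; rewrite expf_eq0 /= (gt_eqF D0).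
have sY : 0 < Num.sqrt Y by rewrite sqrtr_gt0.
have h0 : 0 < `|D| / Num.sqrt Y by rewrite divr_gt0 // normr_gt0 gt_eqF.
split => //.
have hX : (`|D| / Num.sqrt Y) ^+ 2 = X.
  rewrite expr_div_n sqr_sqrtr ?ltW // real_normK ?realE ?(ltW D0) //.
  by rewrite -key mulfK // gt_eqF.
by rewrite -hX sqrtr_sqr gtr0_norm.
Qed.

Lemma pi_formula (R : realType) (A P Q : R * R) (h2 : R) :
  ccw A P Q -> eucl_dist A P = eucl_dist A Q -> 0 < h2 < dist_to_line A P Q ->
  polygon_pi (triangle A P Q) (axis_point A P Q h2) [:: A; P; Q] =
  2^-1 * (4 * dist_to_line A P Q / h2 + dist_to_line A P Q / (dist_to_line A P Q - h2)).
Proof.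
move=> ccwA iso /andP[h20 h2h].
have [h0 mh] := @geom R A P Q ccwA iso.
have D : cross (psub P A) (psub Q A) != 0 by apply: lt0r_neq0; exact: ccwA.
rewrite /axis_point mh.
set h := dist_to_line A P Q in h0 mh h2h *.
have t0 : 0 < h2 / h by rewrite divr_gt0.
have t1 : h2 / h < 1 by rewrite ltr_pdivrMr // mul1r.
rewrite /polygon_pi /= !big_ord_recr big_ord0 /=.
rewrite gauge1 // gauge2 // gauge3 //.
have hn : h != 0 by rewrite gt_eqF.
have h2n : h2 != 0 by rewrite gt_eqF.
have hh2 : h - h2 != 0 by rewrite subr_eq0 gt_eqF.
have : 1 - h2 / h = (h - h2) / h by field.
move=> ->; rewrite invf_div; field.
by rewrite hh2 h2n hn.
Qed.

Definition gf {R : realType} (h x : R) := 2^-1 * (4 * h / x + h / (h - x)).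

Lemma g_dec (R : realType) (h a b : R) : 0 < a -> a < b -> b < 2 * h / 3 -> gf h b < gf h a.
Proof.
move=> a0 ab bh; rewrite /gf.
have h0 : 0 < h by lra.
have ha : 0 < h - a by lra.
have hb : 0 < h - b by lra.
have b0 : 0 < b by lra.
rewrite -subr_gt0.
have -> : 2^-1 * (4 * h / a + h / (h - a)) - 2^-1 * (4 * h / b + h / (h - b)) =
  h * (b - a) * (4 * (h - a) * (h - b) - a * b) / (2 * a * b * (h - a) * (h - b)).
  by field; rewrite !gt_eqF.
apply: divr_gt0; last by rewrite !mulr_gt0.
rewrite mulr_gt0 ?mulr_gt0 ?subr_gt0 //.
have e1 : a < 2 * (h - a) by lra.
have e2 : b < 2 * (h - b) by lra.
have : a * b < (2 * (h - a)) * (2 * (h - b)) by apply: ltr_pM => //; lra.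
lra.
Qed.

Lemma g_inc (R : realType) (h a b : R) : 2 * h / 3 < a -> a < b -> b < h -> gf h a < gf h b.
Proof.
move=> ha0 ab bh; rewrite /gf.
have h0 : 0 < h by lra.
have ha : 0 < h - a by lra.
have hb : 0 < h - b by lra.
have a0 : 0 < a by lra.
have b0 : 0 < b by lra.
rewrite -subr_gt0.
have -> : 2^-1 * (4 * h / b + h / (h - b)) - 2^-1 * (4 * h / a + h / (h - a)) =
  h * (b - a) * (a * b - 4 * (h - a) * (h - b)) / (2 * a * b * (h - a) * (h - b)).
  by field; rewrite !gt_eqF.
apply: divr_gt0; last by rewrite !mulr_gt0.
rewrite mulr_gt0 ?mulr_gt0 ?subr_gt0 //.
have e1 : 2 * (h - a) < a by lra.
have e2 : 2 * (h - b) < b by lra.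
have : (2 * (h - a)) * (2 * (h - b)) < a * b by apply: ltr_pM => //; lra.
lra.
Qed.

Lemma g_min (R : realType) (h x : R) : 0 < x -> x < h ->
  9 / 2 <= gf h x /\ (gf h x = 9 / 2 -> x = 2 * h / 3).
Proof.
move=> x0 xh; rewrite /gf.
have hx : 0 < h - x by lra.
have E : 2^-1 * (4 * h / x + h / (h - x)) - 9 / 2 = (2 * h - 3 * x) ^+ 2 / (2 * x * (h - x)).
  by field; rewrite !gt_eqF.
split.
  by rewrite -subr_ge0 E divr_ge0 ?sqr_ge0 // ltW // !mulr_gt0.
move=> /eqP; rewrite -subr_eq0 E mulf_eq0 invr_eq0 !mulf_eq0 !(gt_eqF hx) (gt_eqF x0) /= orbF.
rewrite orbb subr_eq0 (_ : (2 == 0 :> R) = false) ?orbF; last by rewrite pnatr_eq0.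
move=> /eqP e.
by rewrite e; field.
Qed.

Lemma g_lim0 (R : realType) (h : R) (f : R -> R) : 0 < h ->
  (forall x, 0 < x < h -> f x = gf h x) -> f x @[x --> 0^'+] --> +oo.
Proof.
move=> h0 Ef; apply/cvgryPge => M.
have e0 : 0 < 2 * h / (`|M| + 1) by rewrite divr_gt0 // ?mulr_gt0 // ltr_pwDr.
near=> x.
have x0 : 0 < x by near: x; exact: nbhs_right_gt.
have xh : x < h by near: x; exact: nbhs_right_lt.
have xe : x < 2 * h / (`|M| + 1) by near: x; exact: nbhs_right_lt.
rewrite Ef ?x0 ?xh // /gf.
have hx : 0 < h - x by lra.
have m1 : 0 < `|M| + 1 by rewrite ltr_pwDr.
have : `|M| + 1 < 2 * h / x.
  by rewrite ltr_pdivlMr // mulrC -ltr_pdivlMr.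
have -> : 2^-1 * (4 * h / x + h / (h - x)) = 2 * h / x + 2^-1 * (h / (h - x)) by field; rewrite !gt_eqF.
have : 0 < h / (h - x) by rewrite divr_gt0.
have := ler_norm M.
set u := 2 * h / x; set v := h / (h - x); lra.
Unshelve. all: end_near.
Qed.

Lemma g_limh (R : realType) (h : R) (f : R -> R) : 0 < h ->
  (forall x, 0 < x < h -> f x = gf h x) -> f x @[x --> h^'-] --> +oo.
Proof.
move=> h0 Ef; apply/cvgryPge => M.
have m1 : 0 < `|M| + 1 by rewrite ltr_pwDr.
have e0 : 0 < h / (2 * (`|M| + 1)) by rewrite divr_gt0 // ?mulr_gt0.
near=> x.
have x0 : 0 < x by near: x; exact: nbhs_left_gt.
have xh : x < h by near: x; exact: nbhs_left_lt.
have xe : h - h / (2 * (`|M| + 1)) < x by near: x; apply: nbhs_left_gt; lra.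
rewrite Ef ?x0 ?xh // /gf.
have hx : 0 < h - x by lra.
have : 2 * (`|M| + 1) < h / (h - x).
  rewrite ltr_pdivlMr // mulrC -ltr_pdivlMr ?mulr_gt0 //; lra.
have -> : 2^-1 * (4 * h / x + h / (h - x)) = 2 * h / x + 2^-1 * (h / (h - x)) by field; rewrite !gt_eqF.
have : 0 < 2 * h / x by rewrite divr_gt0 ?mulr_gt0.
have := ler_norm M.
set u := 2 * h / x; set v := h / (h - x); lra.
Unshelve. all: end_near.
Qed.

Theorem mainTheorem9 (R : realType) (A P Q : R * R) :
  ccw A P Q -> eucl_dist A P = eucl_dist A Q ->
  let T := triangle A P Q in
  let h := dist_to_line A P Q in
  let f := fun h2 : R => polygon_pi T (axis_point A P Q h2) [:: A; P; Q] in
  (forall h2, 0 < h2 < h -> f h2 = 2^-1 * (4 * h / h2 + h / (h - h2))) /\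
  [/\ f x @[x --> 0^'+] --> +oo,
      f x @[x --> h^'-] --> +oo,
      (forall a b, 0 < a -> a < b -> b < 2 * h / 3 -> f b < f a),
      (forall a b, 2 * h / 3 < a -> a < b -> b < h -> f a < f b) &
      f (2 * h / 3) = 9 / 2 /\
      (forall h2, 0 < h2 < h -> 9 / 2 <= f h2 /\ (f h2 = 9 / 2 -> h2 = 2 * h / 3))].
Proof.
move=> ccwA iso T h f.
have [h0 _] := @geom R A P Q ccwA iso.
have h0' : 0 < h := h0.
have Ef : forall h2, 0 < h2 < h -> f h2 = gf h h2.
  by move=> h2 H; rewrite /f /T pi_formula.
split; first exact: Ef.
split.
- exact: (@g_lim0 R h f h0 Ef).
- exact: (@g_limh R h f h0 Ef).
- move=> a b a0 ab bh; rewrite !Ef; first exact: g_dec.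
  + by apply/andP; split; lra.
  + by apply/andP; split; lra.
- move=> a b ha ab bh; rewrite !Ef; first exact: g_inc.
  + by apply/andP; split; lra.
  + by apply/andP; split; lra.
- split.
    rewrite Ef; last by apply/andP; split; lra.
    rewrite /gf; field.
    by rewrite gt_eqF //; lra.
  move=> h2 H; rewrite Ef //; case/andP: H => ? ?; exact: g_min.
Qed.
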